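(* Let $J$ be a januarial of general type $((h_1,g_1),(h_2,g_2))$, embedded in a closed orientable surface of genus $g$, and let $\alpha=v-e$, where $v$ is the number of vertices and $e$ the number of edges of the common graph $\Upsilon$ of $J$. Then $$g=g_1+g_2+\frac{h_1+h_2+\alpha}{2}-1.$$
   Context: Let $\Delta(2,k,\ell)=\langle x,y : x^2=y^k=(xy)^\ell=1\rangle$ with $k,\ell\in\mathbb{Z}_{\ge 2}\cup\{\infty\}$, acting on a finite set $S$. The coset graph $\Gamma$ of this action is defined as follows. Its vertices are the elements of $S$. Two vertices transposed by $x$ are joined by an undirected $x$-edge, and points fixed by $x$ carry no $x$-edge. There is a directed $y$-edge from $u$ to $u y$. $\Gamma$ is $2$-cell embedded in a closed orientable surface using the rotation system that cyclically orders, at each vertex, its incoming $y$-edge, its outgoing $y$-edge and its $x$-edge. The faces of this embedding have boundary labels $y^n$ with $n\mid k$ (called $y$-faces) or $(xy)^m$ with $m\mid\ell$ (called $xy$-faces). The embedded graph is the coset diagram. A januarial $J$ is the coset diagram of such an action in which $\langle xy\rangle$ has exactly two orbits, each of size $|S|/2$; so $J$ has exactly two $xy$-faces. The genus of $J$ is the genus of this surface. Let $S_1,S_2$ be the closures of the two $xy$-faces (discs). Collapsing every $y$-face to a point gives the companion graph $\Gamma'$ and the companion diagram $J'$; let $S_i'$ be the images of $S_i$. Let $R_i$ be a small closed neighbourhood of $S_i'$ in $J'$. Then $R_i$ is a compact surface with boundary; let $g_i$ be its genus and $h_i$ the number of boundary components of $R_i$. The common graph is $\Upsilon=S_1'\cap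 S_2'$. $J$ is of simple type if $\Upsilon$ is a union of $h$ pairwise disjoint simple circuits; in that case $h_1=h_2=h$ and the type is written $(h,g_1,g_2)$. Otherwise $J$ is of general type, written $((h_1,g_1),(h_2,g_2))$. *)

(* Defs.v *)
From mathcomp Require Import all_boot all_order all_algebra all_fingroup.
Set Implicit Arguments. Unset Strict Implicit. Unset Printing Implicit Defensive.
Import GRing.Theory Num.Theory.

(* Conventions: S is a finite type T; the generators x, y of Delta(2,k,l) act
   by permutations x y : {perm T}.  The paper writes the action on the right
   (u |-> u x); in mathcomp (x * y) u = y (x u), i.e. the perm (x * y) is the
   paper's "xy". *)

(* k, l : option nat, with None standing for infinity. *)
Definition order_divides (T : finType) (o : option nat) (s : {perm T}) : bool :=
  if o is Some n then (2 <= n)%N && ((s ^+ n)%g == 1%g) else true.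

Definition Delta_action (T : finType) (k l : option nat) (x y : {perm T}) : Prop :=
  [/\ (x ^+ 2)%g = 1%g, order_divides k y & order_divides l (x * y)%g].

Definition gen_rel (T : finType) (x y : {perm T}) : rel T :=
  fun u v => (v == x u) || (v == y u).
Definition transitive_action (T : finType) (x y : {perm T}) : Prop :=
  forall u v : T, connect (gen_rel x y) u v.

Definition januarial (T : finType) (x y : {perm T}) : Prop :=
  [/\ transitive_action x y, #|porbits (x * y)%g| = 2%N &
      forall O, O \in porbits (x * y)%g -> (2 * #|O|)%N = #|T| ].

Definition xedges (T : finType) (x : {perm T}) : {set {set T}} :=
  [set e in porbits x | #|e| == 2%N].

Definition meets (T : finType) (A B : {set T}) : bool := A :&: B != set0.

(* Euler characteristic of the coset diagram J: vertices |S|, edges = x-edges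
   plus one directed y-edge u -> u y per u, faces = y-faces + xy-faces. *)
Definition chi_J (T : finType) (x y : {perm T}) : int :=
  (#|T|%:Z - (#|xedges x| + #|T|)%:Z + (#|porbits y| + #|porbits (x * y)%g|)%:Z)%R.

Definition is_genus (chi : int) (g : nat) : Prop := chi = (2 - 2 * g%:Z)%R.

(* ---- companion diagram J' ----
   vertices of Gamma' = y-orbits (collapsed y-faces), edges = x-edges;
   the rotation at a collapsed vertex is the cyclic y-order of its darts.
   For an xy-orbit O (an xy-face), S_O' = closure of the image of the face:   *)

Definition Vface (T : finType) (y : {perm T}) (O : {set T}) : {set {set T}} :=
  [set C in porbits y | meets C O].
Definition Eface (T : finType) (x : {perm T}) (O : {set T}) : {set {set T}} :=
  [set e in xedges x | meets e O].

(* next element of D after w in the cyclic y-order *)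
Definition next_in (T : finType) (y : {perm T}) (D : {set T}) (w : T) : T :=
  (y ^+ (head 0%N [seq k <- (iota 1 #|T|) | (y ^+ k)%g w \in D]))%g w.

Definition orbit_count (T : finType) (f : T -> T) (D : {set T}) : nat :=
  #|[set [set v | fconnect f w v] | w in D]|.

(* Number of faces of the subgraph H_O = S_O' (as a graph) with the rotation
   system induced from J': faces of the induced map on the darts of H_O
   (face permutation = x followed by the induced rotation), plus isolated
   vertices.  The small closed neighbourhood R_O of S_O' in J' is the ribbon
   surface of H_O with the disc of the face O glued in, so R_O has
   (faces of H_O) - 1 boundary components, and capping them yields the
   closed surface of the map H_O. *)
Definition face_count_H (T : finType) (x y : {perm T}) (O : {set T}) : nat :=
  let D := cover (Eface x O) in
  (orbit_count (fun w => next_in y D (x w)) D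
   + #|[set C in Vface y O | C :&: D == set0]|)%N.

Definition hbound (T : finType) (x y : {perm T}) (O : {set T}) : nat :=
  (face_count_H x y O).-1.

Definition chi_capped_R (T : finType) (x y : {perm T}) (O : {set T}) : int :=
  (#|Vface y O|%:Z - #|Eface x O|%:Z + (face_count_H x y O)%:Z)%R.

Definition Vcommon (T : finType) (y : {perm T}) (O1 O2 : {set T}) : {set {set T}} :=
  [set C in porbits y | meets C O1 && meets C O2].
Definition Ecommon (T : finType) (x : {perm T}) (O1 O2 : {set T}) : {set {set T}} :=
  [set e in xedges x | meets e O1 && meets e O2].

Definition alpha (T : finType) (x y : {perm T}) (O1 O2 : {set T}) : int :=
  (#|Vcommon y O1 O2|%:Z - #|Ecommon x O1 O2|%:Z)%R.

(* simple type: Upsilon is a disjoint union of simple circuits, i.e. every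
   vertex of Upsilon has degree 2 in Upsilon (loops counted twice); the degree
   of a vertex C is the number of darts at C on edges of Upsilon. *)
Definition simple_type (T : finType) (x y : {perm T}) (O1 O2 : {set T}) : Prop :=
  forall C, C \in Vcommon y O1 O2 -> #|C :&: cover (Ecommon x O1 O2)| = 2%N.

Definition general_type (T : finType) (x y : {perm T}) (O1 O2 : {set T}) : Prop :=
  ~ simple_type x y O1 O2.

(* Main.v *)
Require Import Defs.
From mathcomp Require Import all_boot all_order all_algebra all_fingroup.
From mathcomp Require Import zify ring lra.
Import GRing.Theory Num.Theory.
Local Open Scope ring_scope.

Lemma porbit_in_two (T : finType) (s : {perm T}) (O1 O2 : {set T}) :
  #|porbits s| = 2%N -> O1 \in porbits s -> O2 \in porbits s -> O1 != O2 ->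
  forall t, (t \in O1) || (t \in O2).
Proof.
move=> c2 h1 h2 neq t.
have sub : [set O1; O2] \subset porbits s.
  by apply/subsetP=> C; rewrite !inE => /orP[]/eqP->.
have : porbits s = [set O1; O2].
  apply/esym/eqP; rewrite eqEcard sub /= c2 cards2 neq //.
move=> E.
have : porbit s t \in porbits s by apply: imset_f.
by rewrite E !inE => /orP[]/eqP <-; rewrite porbit_id ?orbT.
Qed.

Lemma porbit_nonempty (T : finType) (s : {perm T}) C :
  C \in porbits s -> exists t, t \in C.
Proof. by case/imsetP=> t _ ->; exists t; apply: porbit_id. Qed.

Lemma face_pos (T : finType) (x y : {perm T}) (O : {set T}) :
  (exists t, t \in O) -> (0 < face_count_H x y O)%N.
Proof.
move=> [t tO]; rewrite /face_count_H.
set D := cover (Eface x O).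
have [/set0Pn [w wD] | D0] := boolP (D != set0).
  rewrite /orbit_count.
  suff : (0 < #|[set [set v | fconnect (fun w0 => next_in y D (x w0)) w0 v] | w0 in D]|)%N by move=> h; apply: leq_trans h (leq_addr _ _).
  by rewrite card_gt0; apply/set0Pn; eexists; apply: imset_f; exact: wD.
move/negPn/eqP: D0 => D0.
suff : (0 < #|[set C in Vface y O | C :&: D == set0]|)%N by move=> h; apply: leq_trans h (leq_addl _ _).
rewrite card_gt0; apply/set0Pn; exists (porbit y t).
rewrite !inE D0 setI0 eqxx andbT /= /meets imset_f //=.
by apply/set0Pn; exists t; rewrite inE porbit_id.
Qed.

Lemma fin (g g1 g2 h b b' : nat) : (2 * g%:Z = 2*g1%:Z + 2*g2%:Z + h%:Z + (b%:Z - b'%:Z) - 2)%R ->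
 (g%:R : rat) = g1%:R + g2%:R + (h%:R + (b%:Z - b'%:Z)%:~R)/2 - 1.
Proof.
move=> Z; have := congr1 (fun z : int => z%:~R : rat) Z.
rewrite !(intrD, intrN, intrM) -!pmulrn => Zr.
lra.
Qed.

Theorem lemma5 (T : finType) (k l : option nat) (x y : {perm T})
    (O1 O2 : {set T}) (g g1 g2 h1 h2 : nat) :
  Delta_action k l x y ->
  januarial x y ->
  O1 \in porbits (x * y)%g -> O2 \in porbits (x * y)%g -> O1 != O2 ->
  general_type x y O1 O2 ->
  h1 = hbound x y O1 -> h2 = hbound x y O2 ->
  is_genus (chi_capped_R x y O1) g1 -> is_genus (chi_capped_R x y O2) g2 ->
  is_genus (chi_J x y) g ->
  (g%:R : rat) = g1%:R + g2%:R + ((h1 + h2)%:R + (alpha x y O1 O2)%:~R) / 2 - 1.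
Proof.
move=> _ [_ c2 _] i1 i2 neq _ eh1 eh2.
rewrite /is_genus /chi_capped_R /chi_J /alpha.
have cov := @porbit_in_two _ _ _ _ c2 i1 i2 neq.
have F1 := @face_pos _ x y _ (@porbit_nonempty _ _ _ i1).
have F2 := @face_pos _ x y _ (@porbit_nonempty _ _ _ i2).
have VU : Vface y O1 :|: Vface y O2 = porbits y.
  apply/setP=> C; rewrite !inE; case Cy: (C \in porbits y) => //=.
  have [t tC] := @porbit_nonempty _ _ _ Cy.
  rewrite /meets; case/orP: (cov t) => tO; [apply/orP; left|apply/orP; right];
    by apply/set0Pn; exists t; rewrite inE tC.
have VI : Vface y O1 :&: Vface y O2 = Vcommon y O1 O2.
  by apply/setP=> C; rewrite !inE; case: (C \in porbits y).
have EU : Eface x O1 :|: Eface x O2 = xedges x.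
  apply/setP=> e; rewrite !inE; case ex: (e \in porbits x) => //=.
  case c: (#|e| == 2%N) => //=.
  have : (0 < #|e|)%N by rewrite (eqP c).
  rewrite card_gt0 => /set0Pn [t te].
  rewrite /meets; case/orP: (cov t) => tO; [apply/orP; left|apply/orP; right];
    by apply/set0Pn; exists t; rewrite inE te.
have EI : Eface x O1 :&: Eface x O2 = Ecommon x O1 O2.
  by apply/setP=> C; rewrite !inE; case: (C \in porbits x); case: (#|C| == 2%N).
have cV := cardsUI (Vface y O1) (Vface y O2).
have cE := cardsUI (Eface x O1) (Eface x O2).
rewrite VU VI in cV; rewrite EU EI in cE.
rewrite c2 /hbound in eh1 eh2 * => G1 G2 G.
have Z : (2 * g%:Z = 2 * g1%:Z + 2 * g2%:Z + (h1 + h2)%:Z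
            + (#|Vcommon y O1 O2|%:Z - #|Ecommon x O1 O2|%:Z) - 2)%R.
  have e1 : (h1 + 1 = face_count_H x y O1)%N by rewrite eh1 addn1 prednK.
  have e2 : (h2 + 1 = face_count_H x y O2)%N by rewrite eh2 addn1 prednK.
  clear eh1 eh2.
  move: (#|porbits y|) (#|Vcommon y O1 O2|) (#|Vface y O1|) (#|Vface y O2|) cV G1 G2 G => a b c d cV G1 G2 G.
  move: (#|xedges x|) (#|Ecommon x O1 O2|) (#|Eface x O1|) (#|Eface x O2|) cE G1 G2 G => a' b' c' d' cE G1 G2 G.
  move: (face_count_H x y O1) (face_count_H x y O2) e1 e2 G1 G2 => f1 f2 e1 e2 G1 G2.
  clear -cV cE G1 G2 G e1 e2. lia.
exact: (@fin _ _ _ _ _ _ Z).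
Qed.
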